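(* Suppose that $\mathcal{H}$ is a group of automorphisms of a totally disconnected, locally compact group $G$ that is virtually flat. Then $\mathcal{H}_{FC_d}$ is a normal subgroup of $\mathcal{H}$ that contains every flat subgroup of $\mathcal{H}$ of finite index. In particular, $\mathcal{H}_{FC_d}$ has finite index in $\mathcal{H}$.
   Context: Automorphisms are continuous with continuous inverse. $\mathcal{B}(G)$ is the set of compact, open subgroups of $G$ with metric $d(V,W)=\log\bigl(|V:V\cap W|\cdot|W:W\cap V|\bigr)$. A set $B$ of automorphisms is bounded if $B.V=\{\beta(V):\beta\in B\}$ has bounded diameter for some (equivalently every) $V\in\mathcal{B}(G)$. $\mathcal{H}_{FC_d}=\{\varphi\in\mathcal{H}:\{\psi\varphi\psi^{-1}:\psi\in\mathcal{H}\}\text{ is bounded}\}$. The scale of $\varphi$ is $s_G(\varphi)=\min\{|\varphi(V):\varphi(V)\cap V|:V\in\mathcal{B}(G)\}$; a group $\mathcal{K}$ of automorphisms is flat if there is $O\in\mathcal{B}(G)$ with $|\varphi(O):\varphi(O)\cap O|=s_G(\varphi)$ for all $\varphi\in\mathcal{K}$; $\mathcal{H}$ is virtually flat if it has a flat subgroup of finite index. *)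

(* Defs.v *)
From HB Require Import structures.
From mathcomp Require Import all_boot.
From mathcomp Require Import boolp classical_sets topology.
From Stdlib Require Reals.

Set Implicit Arguments.
Unset Strict Implicit.
Unset Printing Implicit Defensive.

Local Open Scope classical_set_scope.

Section TDLCdef.
Variables (G : topologicalType) (mul : G -> G -> G) (inv : G -> G) (one : G).

Definition is_tdlc_group : Prop :=
  [/\ [/\ (forall x y z, mul x (mul y z) = mul (mul x y) z),
      (forall x, mul one x = x) & (forall x, mul (inv x) x = one)],
      continuous (fun p : G * G => mul p.1 p.2) /\ continuous inv,
      hausdorff_space G,
      locally_compact [set: G] &
      totally_disconnected [set: G]].

End TDLCdef.

Record tdlcGroup (G : topologicalType) := TDLCGroup {
  mul : G -> G -> G;
  inv : G -> G;
  one : G;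
  tdlc_axioms : is_tdlc_group mul inv one }.

Section TDLC.
Variables (G : topologicalType) (T : tdlcGroup G).
Local Notation mul := (mul T).
Local Notation inv := (inv T).
Local Notation one := (one T).

Definition is_subgroup (V : set G) : Prop :=
  [/\ V one, (forall x y, V x -> V y -> V (mul x y)) & (forall x, V x -> V (inv x))].

Definition compact_open_subgroup (V : set G) : Prop :=
  [/\ is_subgroup V, open V & compact V].

Definition has_index (A B : set G) (n : nat) : Prop :=
  exists s : 'I_n -> G, (forall i, A (s i)) /\
    (forall x, A x -> exists! i, B (mul (inv (s i)) x)).

(** the index |A : B| (0 if it is infinite; it is finite for compact open
    subgroups, the only case used) *)
Definition index (A B : set G) : nat := xget 0%N [set n | has_index A B n].

Definition dist (V W : set G) : Reals.Rdefinitions.R :=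
  Reals.Rpower.ln (Reals.Raxioms.INR (index V (V `&` W) * index W (W `&` V))).

Definition inverse_fun (f g : G -> G) : Prop := cancel f g /\ cancel g f.

Definition is_automorphism (f : G -> G) : Prop :=
  [/\ (forall x y, f (mul x y) = mul (f x) (f y)), continuous f &
      exists g, inverse_fun f g /\ continuous g].

Definition is_aut_group (H : set (G -> G)) : Prop :=
  [/\ (forall f, H f -> is_automorphism f), H id,
      (forall f g, H f -> H g -> H (f \o g)) &
      (forall f, H f -> exists2 g, H g & inverse_fun f g)].

Definition is_sub_aut_group (K H : set (G -> G)) : Prop :=
  K `<=` H /\ is_aut_group K.

Definition is_normal_sub_aut_group (K H : set (G -> G)) : Prop :=
  is_sub_aut_group K H /\
  forall psi psi' phi, H psi -> inverse_fun psi psi' -> K phi ->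
    K (psi \o phi \o psi').

Definition finite_index (K H : set (G -> G)) : Prop :=
  exists n (f : 'I_n -> G -> G), (forall i, H (f i)) /\
    forall h, H h -> exists i k, K k /\ h = f i \o k.

Definition bounded_auts (B : set (G -> G)) : Prop :=
  exists V, compact_open_subgroup V /\
    exists M : Reals.Rdefinitions.R, forall b1 b2, B b1 -> B b2 ->
      Reals.Rdefinitions.Rle (dist (b1 @` V) (b2 @` V)) M.

Definition FCd (H : set (G -> G)) : set (G -> G) :=
  [set phi | H phi /\
    bounded_auts [set f | exists psi psi', [/\ H psi, inverse_fun psi psi' &
                                               f = psi \o phi \o psi']]].

Definition displacement (phi : G -> G) (V : set G) : nat :=
  index (phi @` V) (phi @` V `&` V).

Definition scale (phi : G -> G) : nat :=
  xget 0%N [set n | (exists V, compact_open_subgroup V /\ n = displacement phi V) /\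
                    forall V, compact_open_subgroup V -> (n <= displacement phi V)%N].

Definition flat (K : set (G -> G)) : Prop :=
  exists O, compact_open_subgroup O /\
    forall phi, K phi -> displacement phi O = scale phi.

Definition virtually_flat (H : set (G -> G)) : Prop :=
  exists K, [/\ is_sub_aut_group K H, finite_index K H & flat K].

End TDLC.

(* Main.v *)
From Stdlib Require Import Reals Lra.
From HB Require Import structures.
Require Import Defs.
From mathcomp Require Import all_boot.
From mathcomp Require Import boolp classical_sets topology.
From mathcomp Require Import zify.

Local Open Scope classical_set_scope.

Definition pt_of (X : topologicalType) (x : X) : Type := X.
HB.instance Definition _ (X : topologicalType) (x : X) := Topological.on (pt_of X x).
HB.instance Definition _ (X : topologicalType) (x : X) := isPointed.Build (pt_of X x) x.
Lemma compact_cover' {X : topologicalType} (x : X) (A : set X) : compact A -> cover_compact A.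
Proof. move=> cA. have e := (compact_cover (pt_of X x)). have : @compact (pt_of X x) A by []. rewrite e. exact. Qed.

Section Grp.
Variables (G : topologicalType) (T : tdlcGroup G).
Local Notation mul := (Defs.mul T).
Local Notation inv := (Defs.inv T).
Local Notation one := (Defs.one T).

Lemma mulA x y z : mul x (mul y z) = mul (mul x y) z.
Proof. by case: (tdlc_axioms T) => -[]. Qed.
Lemma mul1g x : mul one x = x.
Proof. by case: (tdlc_axioms T) => -[]. Qed.
Lemma mulVg x : mul (inv x) x = one.
Proof. by case: (tdlc_axioms T) => -[]. Qed.
Lemma mulKg x y : mul (inv x) (mul x y) = y.
Proof. by rewrite mulA mulVg mul1g. Qed.
Lemma mulgV x : mul x (inv x) = one.
Proof. by rewrite -(mulKg (inv x) (mul x (inv x))) (mulKg x) mulVg. Qed.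
Lemma mulg1 x : mul x one = x.
Proof. by rewrite -(mulVg x) mulA mulgV mul1g. Qed.
Lemma mulKVg x y : mul x (mul (inv x) y) = y.
Proof. by rewrite mulA mulgV mul1g. Qed.
Lemma mulg_inj x y z : mul x y = mul x z -> y = z.
Proof. by move=> e; rewrite -(mulKg x y) e mulKg. Qed.
Lemma inv_uniq a b : mul a b = one -> a = inv b.
Proof. by move=> e; rewrite -(mulg1 a) -(mulgV b) mulA e mul1g. Qed.
Lemma invMg x y : inv (mul x y) = mul (inv y) (inv x).
Proof. by apply/esym/inv_uniq; rewrite -mulA mulKg mulVg. Qed.
Lemma invgK x : inv (inv x) = x.
Proof. by apply/esym/inv_uniq; rewrite mulgV. Qed.

Lemma lmul_cont c : continuous (fun y => mul c y).
Proof.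
move=> y; have [_ [hc _] _ _ _] := tdlc_axioms T.
apply: (@continuous2_cvg _ _ _ _ (nbhs y) _ (fun=> c) id (Defs.mul T)).
- exact: (hc (c, y)).
- exact: cvg_cst.
- exact: cvg_id.
Qed.

Definition grel (B : set G) x y := B (mul (inv x) y).

Lemma grelR {B : set G} {x} : is_subgroup T B -> grel B x x.
Proof. by case=> B1 _ _; rewrite /grel mulVg. Qed.
Lemma grelS {B : set G} {x y} : is_subgroup T B -> grel B x y -> grel B y x.
Proof. by case=> _ _ Bi /Bi; rewrite /grel invMg invgK. Qed.
Lemma grelT {B : set G} {x y z} : is_subgroup T B -> grel B x y -> grel B y z -> grel B x z.
Proof. by case=> _ Bm _ h1 h2; have := Bm _ _ h1 h2; rewrite /grel -mulA mulKVg. Qed.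

Lemma subgroupI {A B : set G} : is_subgroup T A -> is_subgroup T B -> is_subgroup T (A `&` B).
Proof.
case=> A1 Am Ai [B1 Bm Bi]; split; first by [].
- by move=> x y [? ?] [? ?]; split; [apply: Am|apply: Bm].
- by move=> x [? ?]; split; [apply: Ai|apply: Bi].
Qed.

Lemma card_inj n m (R : 'I_m -> 'I_n -> Prop) :
  (forall j, exists i, R j i) -> (forall j j' i, R j i -> R j' i -> j = j') ->
  (m <= n)%N.
Proof.
move=> /choice [f Hf] Hu.
have fi : injective f by move=> j j' e; apply: (Hu _ _ (f j)) => //; rewrite e.
by have := leq_card f fi; rewrite !card_ord.
Qed.

Lemma has_index_inj {A B : set G} {n} {s : 'I_n -> G} :
  (forall x, A x -> exists! i, B (mul (inv (s i)) x)) -> is_subgroup T B ->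
  (forall i, A (s i)) ->
  forall i j, B (mul (inv (s i)) (s j)) -> i = j.
Proof.
move=> h Bs As i j Bij.
have [k [_ kU]] := h _ (As j).
by rewrite -(kU i Bij) -(kU j (grelR Bs)).
Qed.

Lemma has_index_uniq (A B : set G) n m : is_subgroup T B ->
  has_index T A B n -> has_index T A B m -> n = m.
Proof.
move=> Bs hn hm.
suff H : forall n m, has_index T A B n -> has_index T A B m -> (m <= n)%N.
  by apply/eqP; rewrite eqn_leq (H _ _ hm hn) (H _ _ hn hm).
clear n m hn hm => n m [s [As hs]] [t [At ht]].
apply: (@card_inj n m (fun j i => B (mul (inv (s i)) (t j)))).
  by move=> j; have [i [? _]] := hs _ (At j); exists i.
move=> j j' i h1 h2; have := has_index_inj ht Bs At j j'; apply.
by apply: (grelT Bs (grelS Bs h1)) h2.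
Qed.

Lemma index_eq {A B : set G} {n} : is_subgroup T B -> has_index T A B n -> Defs.index T A B = n.
Proof.
move=> Bs hn; rewrite /Defs.index; case: xgetP => [k -> hk|/(_ n)//].
exact: has_index_uniq hk hn.
Qed.

Lemma list_trans (A B : set G) : is_subgroup T B -> forall l : seq G,
  (forall y, y \in l -> A y) ->
  exists n (s : 'I_n -> G), [/\ forall i, A (s i),
    forall i j, B (mul (inv (s i)) (s j)) -> i = j &
    forall x y, y \in l -> B (mul (inv y) x) -> exists i, B (mul (inv (s i)) x)].
Proof.
move=> Bs; elim=> [|a l IH] hl.
  by exists 0%N, (fun=> one); split=> [[]//|[]//|].
have [n [s [As sinj scov]]] : exists n (s : 'I_n -> G), [/\ forall i, A (s i),
    forall i j, B (mul (inv (s i)) (s j)) -> i = j &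
    forall x y, y \in l -> B (mul (inv y) x) -> exists i, B (mul (inv (s i)) x)].
  by apply: IH => y yl; apply: hl; rewrite inE yl orbT.
case: (pselect (exists i, B (mul (inv (s i)) a))) => [[i0 hi0]|na].
  exists n, s; split=> // x y; rewrite inE => /orP[/eqP->|yl] hy.
    by exists i0; apply: (grelT Bs hi0 hy).
  exact: scov yl hy.
pose s' := fun i : 'I_n.+1 => if unlift ord_max i is Some j then s j else a.
have s'l j : s' (lift ord_max j) = s j by rewrite /s' liftK.
have s'm : s' ord_max = a by rewrite /s' unlift_none.
exists n.+1, s'; split.
- move=> i; case: (unliftP ord_max i) => [j ->|->]; rewrite ?s'l ?s'm //.
  by apply: hl; rewrite inE eqxx.
- move=> i j; case: (unliftP ord_max i) => [i' ->|->];
    case: (unliftP ord_max j) => [j' ->|->]; rewrite ?s'l ?s'm //.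
  + by move/sinj->.
  + by move=> h; case: na; exists i'.
  + by move=> h; case: na; exists j'; apply: (grelS Bs h).
- move=> x y; rewrite inE => /orP[/eqP->|yl] hy.
    by exists ord_max; rewrite s'm.
  by have [i hi] := scov _ _ yl hy; exists (lift ord_max i); rewrite s'l.
Qed.

Lemma has_index_ex {A B : set G} : compact A -> is_subgroup T B -> open B ->
  exists n, has_index T A B n.
Proof.
move=> /(compact_cover' one) cA Bs oB.
have cov0 : A `<=` cover A (fun x => [set y | B (mul (inv x) y)]).
  by move=> y Ay; exists y => //; apply: (grelR Bs).
have [D' sD cov] := cA G A (fun x => [set y | B (mul (inv x) y)])
  (fun x _ => (continuousP _).1 (lmul_cont (inv x)) B oB) cov0.
have [n [s [As sinj scov]]] := @list_trans A B Bs (finmap.enum_fset D')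
  (fun y yD => set_mem (sD y yD)).
exists n, s; split=> // x Ax.
have [y yD hy] := cov x Ax.
have [i hi] := scov x y yD hy.
exists i; split=> // j hj; apply: sinj.
exact: (grelT Bs hi (grelS Bs hj)).
Qed.

Definition hom (f : G -> G) := forall x y, f (mul x y) = mul (f x) (f y).

Lemma hom_one f : hom f -> f one = one.
Proof.
move=> hf; apply: (@mulg_inj (f one)).
by rewrite -hf mul1g mulg1.
Qed.

Lemma hom_inv f x : hom f -> f (inv x) = inv (f x).
Proof. by move=> hf; apply: inv_uniq; rewrite -hf mulVg hom_one. Qed.

Lemma hom_inverse {f g} : hom f -> inverse_fun f g -> hom g.
Proof.
move=> hf [fK gK] x y.
by rewrite -{1}(gK x) -{1}(gK y) -hf fK.
Qed.

Lemma image_inv {f g} {A : set G} : inverse_fun f g -> f @` A = g @^-1` A.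
Proof.
case=> fK gK; apply/seteqP; split=> x /=.
  by case=> y Ay <-; rewrite fK.
by move=> Agx; exists (g x); rewrite ?gK.
Qed.

Lemma image_invK {f g} {A : set G} : inverse_fun f g -> g @` (f @` A) = A.
Proof.
case=> fK gK; apply/seteqP; split=> x /=.
  by case=> y [z Az <-] <-; rewrite fK.
by move=> Ax; exists (f x); [exists x|rewrite fK].
Qed.

Lemma imageI' (f : G -> G) (A B : set G) : injective f -> f @` (A `&` B) = f @` A `&` f @` B.
Proof.
move=> fi; apply/seteqP; split=> x /=.
  by case=> y [Ay By] <-; split; exists y.
by case=> -[y Ay <-] [z Bz /fi e]; exists y => //; split; rewrite // -e.
Qed.

Lemma has_index_img {f g} {A B : set G} {n} : hom f -> inverse_fun f g ->
  has_index T A B n -> has_index T (f @` A) (f @` B) n.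
Proof.
move=> hf [fK gK] [s [As hs]].
have fi : injective f := can_inj fK.
have imgE z : (f @` B) (f z) <-> B z.
  by split=> [[y By /fi <-]|Bz]; [|exists z].
exists (f \o s); split; first by move=> i; exists (s i).
move=> _ [x Ax <-]; have [i [hi iu]] := hs x Ax.
exists i; split=> /=; first by rewrite -hom_inv // -hf; apply/imgE.
by move=> j; rewrite -hom_inv // -hf => /imgE /iu.
Qed.

Lemma index_img {f g} (A W : set G) : hom f -> inverse_fun f g ->
  Defs.index T (f @` A) (f @` A `&` f @` W) = Defs.index T A (A `&` W).
Proof.
move=> hf fg; have [fK gK] := fg.
rewrite -imageI'; last exact: can_inj fK.
rewrite /Defs.index; congr (xget _ _); apply/seteqP; split=> n /=.
  move=> /(has_index_img (hom_inverse hf fg) (conj gK fK)).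
  by rewrite !(image_invK fg).
move=> h; exact: (has_index_img hf fg h).
Qed.

Lemma cos_img {f} {A : set G} : is_automorphism T f ->
  compact_open_subgroup T A -> compact_open_subgroup T (f @` A).
Proof.
case=> hf cf [g [fg cg]] [[A1 Am Ai] oA cA]; split; first split.
- by exists one => //; apply: hom_one.
- by move=> _ _ [x Ax <-] [y Ay <-]; exists (mul x y); [apply: Am|apply: hf].
- by move=> _ [x Ax <-]; exists (inv x); [apply: Ai|apply: hom_inv].
- by rewrite (image_inv fg); apply: (continuousP _).1.
- by apply: continuous_compact => //; apply: continuous_subspaceT.
Qed.

Lemma card_inj' (F : finType) m (R : 'I_m -> F -> Prop) :
  (forall j, exists i, R j i) -> (forall j j' i, R j i -> R j' i -> j = j') ->
  (m <= #|F|)%N.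
Proof.
move=> /choice [f Hf] Hu.
have fi : injective f by move=> j j' e; apply: (Hu _ _ (f j)) => //; rewrite e.
by have := leq_card f fi; rewrite !card_ord.
Qed.

Lemma idx_has {A W : set G} : compact_open_subgroup T A -> compact_open_subgroup T W ->
  has_index T A (A `&` W) (Defs.index T A (A `&` W)).
Proof.
move=> [sA oA cA] [sW oW cW].
have sAW := subgroupI sA sW.
have [n h] := has_index_ex cA sAW (openI oA oW).
by rewrite (index_eq sAW h).
Qed.

Lemma idx_pos {A W : set G} : compact_open_subgroup T A -> compact_open_subgroup T W ->
  (0 < Defs.index T A (A `&` W))%N.
Proof.
move=> cA cW; have [s [_ hs]] := idx_has cA cW.
have [[A1 _ _] _ _] := cA.
by have [i _] := hs _ A1; case: (Defs.index T A (A `&` W)) i => [[]|].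
Qed.

Lemma submult {A B C : set G} : compact_open_subgroup T A ->
  compact_open_subgroup T B -> compact_open_subgroup T C ->
  (Defs.index T A (A `&` C) <= Defs.index T A (A `&` B) * Defs.index T B (B `&` C))%N.
Proof.
move=> cA cB cC.
have [s [As hs]] := idx_has cA cB.
have [t [Bt ht]] := idx_has cB cC.
have [u [Au hu]] := idx_has cA cC.
have [[A1 Am Ai] _ _] := cA; have [sC _ _] := cC.
have sA : is_subgroup T A by [].
have sAC := subgroupI sA sC.
rewrite -(card_ord (Defs.index T A (A `&` B))) -(card_ord (Defs.index T B (B `&` C))) -card_prod.
apply: (@card_inj' _ _ (fun k ij => (A `&` B) (mul (inv (s ij.1)) (u k)) /\
   (B `&` C) (mul (inv (t ij.2)) (mul (inv (s ij.1)) (u k))))).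
  move=> k; have [i [hi _]] := hs _ (Au k).
  have [j [hj _]] := ht _ hi.2.
  by exists (i, j).
move=> k k' [i j] /= [_ [_ h1]] [_ [_ h2]].
have e := grelT sC (grelS sC h1) h2.
rewrite /grel invMg invgK -mulA mulKVg in e.
apply: (has_index_inj hu sAC Au); split; last exact: e.
by apply: Am; [apply: Ai|].
Qed.

Lemma ln_le' x y : Rlt 0 x -> Rle x y -> Rle (ln x) (ln y).
Proof.
move=> x0 /Rle_lt_or_eq_dec [xy|->]; last exact: Rle_refl.
by apply: Rlt_le; apply: ln_increasing.
Qed.

Lemma INR_pos n : (0 < n)%N -> Rlt 0 (INR n).
Proof. by move=> /ltP; apply: lt_0_INR. Qed.

Lemma dist_tri {A B C : set G} : compact_open_subgroup T A ->
  compact_open_subgroup T B -> compact_open_subgroup T C ->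
  Rle (dist T A C) (Rplus (dist T A B) (dist T B C)).
Proof.
move=> cA cB cC; rewrite /dist.
have h1 := submult cA cB cC; have h2 := submult cC cB cA.
have p1 := idx_pos cA cB; have p2 := idx_pos cB cA.
have p3 := idx_pos cB cC; have p4 := idx_pos cC cB.
have p5 := idx_pos cA cC; have p6 := idx_pos cC cA.
rewrite -ln_mult; try by apply: INR_pos; rewrite muln_gt0 ?p1 ?p2 ?p3 ?p4.
rewrite -mult_INR; apply: ln_le'; first by apply: INR_pos; rewrite muln_gt0 p5 p6.
apply: le_INR; apply/leP.
apply: (leq_trans (leq_mul h1 h2)).
apply: eq_leq; rewrite ?multE; nia.
Qed.

Lemma dist_sym (A B : set G) : dist T A B = dist T B A.
Proof. by rewrite /dist mulnC. Qed.

Lemma dist_img f g (A B : set G) : hom f -> inverse_fun f g ->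
  dist T (f @` A) (f @` B) = dist T A B.
Proof. by move=> hf fg; rewrite /dist !(index_img _ _ hf fg). Qed.

Lemma dist_self (A : set G) : compact_open_subgroup T A -> dist T A A = R0.
Proof.
move=> [sA _ _]; have [A1 _ _] := sA.
have h : has_index T A (A `&` A) 1.
  exists (fun=> one); split=> // x Ax; exists ord0; split.
    by rewrite /= -(inv_uniq _ _ (mul1g one)) mul1g.
  by move=> j _; rewrite (ord1 j).
have sAA := subgroupI sA sA.
by rewrite /dist (index_eq sAA h) ln_1.
Qed.

Lemma dist_ge0 {A B : set G} : compact_open_subgroup T A ->
  compact_open_subgroup T B -> Rle 0 (dist T A B).
Proof.
move=> cA cB; rewrite /dist -ln_1; apply: ln_le'; first exact: Rlt_0_1.
apply: (@Rle_trans _ (INR 1)); first exact: Rle_refl.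
apply: le_INR; apply/leP.
by rewrite muln_gt0 (idx_pos cA cB) (idx_pos cB cA).
Qed.

Lemma inv_fun_uniq {f g1 g2 : G -> G} : inverse_fun f g1 -> inverse_fun f g2 -> g1 = g2.
Proof.
by move=> [fK1 gK1] [fK2 gK2]; apply: funext => x; rewrite -{2}(gK1 x) fK2.
Qed.

Lemma aut_hom {f} : is_automorphism T f -> hom f.
Proof. by case. Qed.

Lemma aut_inv {f g : G -> G} : is_automorphism T f -> inverse_fun f g -> is_automorphism T g.
Proof.
move=> [hf cf [g0 [fg0 cg0]]] fg.
have e := inv_fun_uniq fg0 fg; subst g0.
split; first exact: hom_inverse hf fg.
  exact: cg0.
by exists f; split=> //; case: fg.
Qed.

Lemma inv_fun_sym {f g : G -> G} : inverse_fun f g -> inverse_fun g f.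
Proof. by case. Qed.

Lemma disp_conj {k k' : G -> G} phi W : is_automorphism T k -> inverse_fun k k' ->
  displacement T (k \o phi \o k') W = displacement T phi (k' @` W).
Proof.
move=> ak kk; rewrite /displacement.
have e1 : (k \o phi \o k') @` W = k @` (phi @` (k' @` W)) by rewrite !image_comp.
have e2 : W = k @` (k' @` W) by rewrite (image_invK (inv_fun_sym kk)).
rewrite e1 [in X in _ `&` X]e2.
exact: index_img (aut_hom ak) kk.
Qed.

Lemma scale_conj {k k' : G -> G} phi : is_automorphism T k -> inverse_fun k k' ->
  scale T (k \o phi \o k') = scale T phi.
Proof.
move=> ak kk; have ak' := aut_inv ak kk.
rewrite /scale; congr (xget _ _); apply/seteqP; split=> n /=.
- move=> [[V [cV ->]] hmin]; split.
    by exists (k' @` V); split; [apply: cos_img|rewrite disp_conj].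
  move=> W cW; rewrite -(image_invK kk (A := W)) -(disp_conj _ _ ak kk).
  by apply: hmin; apply: cos_img.
- move=> [[V [cV ->]] hmin]; split.
    exists (k @` V); split; first exact: cos_img.
    by rewrite disp_conj // (image_invK kk).
  by move=> W cW; rewrite disp_conj //; apply: hmin; apply: cos_img.
Qed.

Lemma fin_bound n (F : 'I_n -> R) : exists M, forall i, Rle (F i) M.
Proof.
elim: n F => [|n IH] F; first by exists R0; case.
have [M hM] := IH (fun i => F (lift ord_max i)).
exists (Rmax M (F ord_max)) => i.
case: (unliftP ord_max i) => [j ->|->].
  exact: Rle_trans (hM j) (Rmax_l _ _).
exact: Rmax_r.
Qed.


Definition Cj (H : set (G -> G)) phi := [set f : G -> G | exists psi psi',
  [/\ H psi, inverse_fun psi psi' & f = psi \o phi \o psi']].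
Definition rb (O : set G) (S : set (G -> G)) :=
  exists M, forall b, S b -> Rle (dist T (b @` O) O) M.

Lemma H_aut {H f} : is_aut_group T H -> H f -> is_automorphism T f.
Proof. by case=> h _ _ _; apply: h. Qed.

Lemma H_inv {H f g} : is_aut_group T H -> H f -> inverse_fun f g -> H g.
Proof.
move=> hH Hf fg; have [_ _ _ hi] := hH.
have [g0 Hg0 fg0] := hi f Hf.
by rewrite -(inv_fun_uniq fg0 fg).
Qed.

Lemma H_comp {H f g} : is_aut_group T H -> H f -> H g -> H (f \o g).
Proof. by case=> _ _ h _; apply: h. Qed.

Lemma H_id {H} : is_aut_group T H -> H id.
Proof. by case. Qed.

Lemma Cj_H {H phi b} : is_aut_group T H -> H phi -> Cj H phi b -> H b.
Proof.
move=> hH Hp [psi [psi' [Hpsi pp ->]]].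
apply: H_comp => //; last exact: H_inv hH Hpsi pp.
exact: H_comp.
Qed.

Lemma Cj_self {H} phi : is_aut_group T H -> Cj H phi phi.
Proof. by move=> hH; exists id, id; split=> //; apply: H_id. Qed.

Lemma aut_dist {f} (A B : set G) : is_automorphism T f ->
  dist T (f @` A) (f @` B) = dist T A B.
Proof. by case=> hf _ [g [fg _]]; apply: dist_img hf fg. Qed.

Lemma rb_bounded {O S} : compact_open_subgroup T O ->
  (forall b, S b -> is_automorphism T b) -> rb O S -> bounded_auts T S.
Proof.
move=> cO aS [M hM]; exists O; split=> //; exists (Rplus M M) => b1 b2 h1 h2.
have c1 := cos_img (aS _ h1) cO; have c2 := cos_img (aS _ h2) cO.
have := dist_tri c1 cO c2; rewrite (dist_sym O).
have := hM _ h1; have := hM _ h2; lra.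
Qed.

Lemma bounded_rb {O S b0} : compact_open_subgroup T O ->
  (forall b, S b -> is_automorphism T b) -> S b0 -> bounded_auts T S -> rb O S.
Proof.
move=> cO aS Sb0 [V [cV [M hM]]].
exists (Rplus (Rplus (dist T O V) M) (dist T (b0 @` V) O)) => b Sb.
have cbO := cos_img (aS _ Sb) cO; have cbV := cos_img (aS _ Sb) cV.
have cb0V := cos_img (aS _ Sb0) cV.
have := dist_tri cbO cbV cO; rewrite (aut_dist _ _ (aS _ Sb)).
have := dist_tri cbV cb0V cO; have := hM _ _ Sb Sb0; lra.
Qed.

Lemma FCdE {H O phi} : is_aut_group T H -> compact_open_subgroup T O ->
  FCd T H phi <-> H phi /\ rb O (Cj H phi).
Proof.
move=> hH cO; split=> -[Hp hb]; split=> //.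
  apply: (bounded_rb cO _ (Cj_self phi hH) hb).
  by move=> b Cb; apply: H_aut hH (Cj_H hH Hp Cb).
apply: (rb_bounded cO _ hb).
by move=> b Cb; apply: H_aut hH (Cj_H hH Hp Cb).
Qed.

Lemma inv_fun_comp {f g f' g' : G -> G} : inverse_fun f f' -> inverse_fun g g' ->
  inverse_fun (f \o g) (g' \o f').
Proof. by move=> [a b] [c d]; split; apply: can_comp. Qed.

Lemma FCd_normal H O : is_aut_group T H -> compact_open_subgroup T O ->
  is_normal_sub_aut_group T (FCd T H) H.
Proof.
move=> hH cO.
have HA : forall f, H f -> is_automorphism T f by move=> f; apply: H_aut.
have CjA : forall phi b, H phi -> Cj H phi b -> is_automorphism T b.
  by move=> phi b Hp Cb; apply: HA; apply: Cj_H hH Hp Cb.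
split; first split.
- by move=> f [].
- split.
  + by move=> f [Hf _]; apply: HA.
  + apply/(FCdE hH cO); split; first exact: H_id.
    exists R0 => b [psi [psi' [Hpsi [_ pK] ->]]].
    have -> : psi \o id \o psi' = id by apply: funext => x /=; rewrite pK.
    by rewrite image_id dist_self //; apply: Rle_refl.
  + move=> f1 f2 /(FCdE hH cO) [H1 [M1 hM1]] /(FCdE hH cO) [H2 [M2 hM2]].
    apply/(FCdE hH cO); split; first exact: H_comp.
    exists (Rplus M2 M1) => b [psi [psi' [Hpsi pp ->]]].
    have C1 : Cj H f1 (psi \o f1 \o psi') by exists psi, psi'.
    have C2 : Cj H f2 (psi \o f2 \o psi') by exists psi, psi'.
    have -> : psi \o (f1 \o f2) \o psi' = (psi \o f1 \o psi') \o (psi \o f2 \o psi').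
      by apply: funext => x /=; case: pp => ->.
    rewrite -image_comp.
    have a1 := CjA _ _ H1 C1; have a2 := CjA _ _ H2 C2.
    have c2 := cos_img a2 cO.
    have := dist_tri (cos_img a1 c2) (cos_img a1 cO) cO.
    rewrite aut_dist //.
    have := hM1 _ C1; have := hM2 _ C2; lra.
  + move=> f /(FCdE hH cO) [Hf [M hM]].
    have [_ _ _ hi] := hH; have [g Hg fg] := hi f Hf.
    exists g => //; apply/(FCdE hH cO); split=> //.
    exists M => b [psi [psi' [Hpsi pp ->]]].
    have Ca : Cj H f (psi \o f \o psi') by exists psi, psi'.
    have aa := CjA _ _ Hf Ca.
    have ba : inverse_fun (psi \o g \o psi') (psi \o f \o psi').
      have [p1 p2] := pp; have [f1 f2] := fg.
      by split=> x /=; rewrite p1 ?f1 ?f2 p2.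
    rewrite -(aut_dist _ _ aa) (image_invK ba) dist_sym.
    exact: hM.
- move=> psi psi' phi Hpsi pp /(FCdE hH cO) [Hp [M hM]].
  apply/(FCdE hH cO); split.
    by apply: (H_comp hH); [apply: (H_comp hH)|apply: (H_inv hH Hpsi pp)].
  exists M => b [chi [chi' [Hchi cc ->]]].
  apply: hM; exists (chi \o psi), (psi' \o chi'); split=> //.
    exact: (H_comp hH).
  exact: inv_fun_comp.
Qed.

Lemma flat_FCd H K : is_aut_group T H -> is_sub_aut_group T K H ->
  finite_index K H -> flat T K -> K `<=` FCd T H.
Proof.
move=> hH [KH hK] [n [f [Hf cover]]] [O [cO hO]] phi Kp.
have Hp := KH _ Kp.
have [_ _ _ Ki] := hK; have [g Kg pg] := Ki phi Kp.
have [M0 hM0] := fin_bound n (fun i => dist T (f i @` O) O).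
apply/(FCdE hH cO); split=> //.
exists (Rplus (ln (INR (scale T phi * scale T g))) (Rplus M0 M0)).
move=> b [psi [psi' [Hpsi pp ->]]].
have [i [k [Kk epsi]]] := cover psi Hpsi.
have [k' Kk' kk] := Ki k Kk.
subst psi.
have [kK k'K] := kk; have [pK p'K] := pp; have [phK gK] := pg.
pose j := k \o psi'; pose beta := k \o phi \o k'; pose gamma := k \o g \o k'.
have eb : f i \o k \o phi \o psi' = f i \o beta \o j.
  by apply: funext => x; rewrite /beta /j /= kK.
have fj : inverse_fun (f i) j.
  split=> x; rewrite /j /=; last exact: p'K.
  by have := pK (k' x); rewrite /= k'K => ->; rewrite k'K.
have af := H_aut hH (Hf i).
have aj := aut_inv af fj.
have Kbeta : K beta by apply: (H_comp hK); [apply: (H_comp hK)|].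
have Kgamma : K gamma by apply: (H_comp hK); [apply: (H_comp hK)|].
have abeta := H_aut hH (KH _ Kbeta).
have ak := H_aut hH (KH _ Kk).
have bg : inverse_fun beta gamma.
  by split=> x; rewrite /beta /gamma /= ?kK ?phK ?gK ?k'K.
have ec : dist T (beta @` O) O = ln (INR (scale T phi * scale T g)).
  rewrite /dist.
  have -> : Defs.index T (beta @` O) (beta @` O `&` O) = scale T phi.
    by rewrite -(scale_conj phi ak kk) -hO.
  have -> : Defs.index T O (O `&` beta @` O) = scale T g.
    have e : O = beta @` (gamma @` O) by rewrite (image_invK (inv_fun_sym bg)).
    transitivity (Defs.index T (beta @` (gamma @` O)) (beta @` (gamma @` O) `&` beta @` O)).
      by rewrite -e.
    rewrite (index_img _ _ (aut_hom abeta) bg).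
    by rewrite -(scale_conj g ak kk) -hO.
  by [].
have ei : (f i \o beta \o j) @` O = f i @` (beta @` (j @` O)) by rewrite !image_comp.
rewrite eb ei.
have cj := cos_img aj cO; have cb := cos_img abeta cO.
have cbj := cos_img abeta cj.
have t1 := dist_tri (cos_img af cbj) (cos_img af cb) cO.
have t2 := dist_tri (cos_img af cb) (cos_img af cO) cO.
rewrite !(aut_dist _ _ af) (aut_dist _ _ abeta) ec in t1 t2.
have e3 : dist T (j @` O) O = dist T (f i @` O) O.
  by rewrite -(aut_dist _ _ af) (image_invK (inv_fun_sym fj)) dist_sym.
have := hM0 i; rewrite /= in e3 *; lra.
Qed.
End Grp.

From mathcomp Require Import all_boot.
From mathcomp Require Import boolp classical_sets topology.
Local Open Scope classical_set_scope.

Theorem lemma3 (G : topologicalType) (T : tdlcGroup G) (H : set (G -> G)) :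
  is_aut_group T H ->
  virtually_flat T H ->
  [/\ is_normal_sub_aut_group T (FCd T H) H,
      (forall K, is_sub_aut_group T K H -> finite_index K H ->
                 flat T K -> K `<=` FCd T H) &
      finite_index (FCd T H) H].
Proof.
move=> hH [K [sK fK flK]].
have [O [cO _]] := flK.
split.
- exact: (@FCd_normal _ _ _ _ hH cO).
- by move=> K' s f fl; apply: (@flat_FCd _ _ _ _ hH s f fl).
- have KF := @flat_FCd _ _ _ _ hH sK fK flK.
  case: fK => [n [f [Hf cov]]]; exists n, f; split=> // h Hh.
  have [i [k [Kk ->]]] := cov h Hh; exists i, k; split=> //.
  exact: KF.
Qed.
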